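(* Let $E=\{E_{\bar a}:\bar a\in[\lambda]^{<\omega}\}$ be a system of $\kappa$-complete ultrafilters, $E_{\bar a}$ on ${}^{\bar a}\kappa$, satisfying coherence. The following are equivalent: (1) $E$ is well-founded. (2) Łoś' Theorem holds for $\mathbb{L}_{\kappa,\omega}(Q^{WF})$-formulas: for every $\bar a\in[\lambda]^{<\omega}$, every family of $\tau$-structures $\{M_s:s\in{}^{\bar a}\kappa\}$, every $\phi(x_1,\dots,x_n)\in\mathbb{L}_{\kappa,\omega}(Q^{WF})(\tau)$ and all $[\bar b_1,f_1]_E,\dots,[\bar b_n,f_n]_E\in\prod M_s/E$, we have $\prod M_s/E\models\phi([\bar b_1,f_1]_E,\dots,[\bar b_n,f_n]_E)$ iff $\{s\in{}^{\bigcup_i\bar b_i}\kappa: M_{s\restriction\bar a}\models\phi(f_1(s\restriction\bar b_1),\dots,f_n(s\restriction\bar b_n))\}\in E_{\bigcup_i\bar b_i}$.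
   Context: Coherence: for $\bar a\subseteq\bar b$, $X\in E_{\bar a}$ iff $\{s\in{}^{\bar b}\kappa: s\restriction\bar a\in X\}\in E_{\bar b}$. Well-foundedness: for any countably many $\bar a_n\in[\lambda]^{<\omega}$ and $X_n\in E_{\bar a_n}$ there is $h:\bigcup_n\bar a_n\to\kappa$ with $h\restriction\bar a_n\in X_n$ for all $n$. Extender product: given $\bar a$ and $\tau$-structures $M_s$ ($s\in{}^{\bar a}\kappa$), $\prod M_s/E$ is the direct limit of the ultraproducts $\prod_{s\in{}^{\bar b}\kappa}M_{s\restriction\bar a}/E_{\bar b}$ ($\bar a\subseteq\bar b\in[\lambda]^{<\omega}$) under the maps induced by restriction; its elements are classes $[\bar b,f]_E$ with $\bar a\subseteq\bar b$ and $f$ a function on ${}^{\bar b}\kappa$ with $f(s)\in M_{s\restriction\bar a}$, where $[\bar b,f]_E=[\bar c,g]_E$ iff $\{s\in{}^{\bar b\cup\bar c}\kappa:f(s\restriction\bar b)=g(s\restriction\bar c)\}\in E_{\bar b\cup\bar c}$ (relations defined similarly). $\mathbb{L}_{\kappa,\omega}(Q^{WF})$ is $\mathbb{L}_{\kappa,\omega}$ with the quantifier $Q^{WF}$: $Q^{WF}xy\,\phi(x,y,\bar z)$ holds iff there is no sequence $(x_n)_{n<\omega}$ with $\phi(x_{n+1},x_n,\bar z)$ for all $n$. *)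

(* Defs.v *)
From mathcomp Require Import all_boot.
From mathcomp Require Import finmap.
From Stdlib Require Import ClassicalEpsilon.

Set Implicit Arguments.
Unset Strict Implicit.
Unset Printing Implicit Defensive.

Local Open Scope fset_scope.

Definition card_lt (I K : Type) : Prop :=
  (exists f : I -> K, injective f) /\ ~ (exists g : K -> I, injective g).

(* kappa-complete ultrafilters on a type T; kappa is (the cardinality  *)
(* of) the type K.  A filter is a collection of subsets (T -> Prop).   *)
Definition kcomplete_ultrafilter (K T : Type) (U : (T -> Prop) -> Prop) : Prop :=
  U (fun _ => True) /\
  ~ U (fun _ => False) /\
  (forall X Y : T -> Prop, U X -> (forall t, X t -> Y t) -> U Y) /\
  (forall X Y : T -> Prop, U X -> U Y -> U (fun t => X t /\ Y t)) /\
  (forall (I : Type) (X : I -> T -> Prop), card_lt I K ->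
      (forall i, U (X i)) -> U (fun t => forall i, X i t)) /\
  (forall X : T -> Prop, U X \/ U (fun t => ~ X t)).

(* Finite subsets abar of lambda (= the type L) and the sets ^abar kappa *)
(* (= {ffun abar -> K}); restriction s |` abar for abar <= bbar.       *)
Definition restr (L : choiceType) (K : Type) (a b : {fset L}) (H : a `<=` b)
  (s : {ffun b -> K}) : {ffun a -> K} := [ffun x : a => s (fincl H x)].

Lemma restr_trans (L : choiceType) (K : Type) (a b c : {fset L})
  (Hab : a `<=` b) (Hbc : b `<=` c) (Hac : a `<=` c) (s : {ffun c -> K}) :
  restr Hab (restr Hbc s) = restr Hac s.
Proof.
apply/ffunP=> x; rewrite !ffunE; congr (s _); exact: val_inj.
Qed.

Definition extender_system (L : choiceType) (K : Type) :=
  forall a : {fset L}, ({ffun a -> K} -> Prop) -> Prop.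

Definition coherent (L : choiceType) (K : Type) (E : extender_system L K) : Prop :=
  forall (a b : {fset L}) (H : a `<=` b) (X : {ffun a -> K} -> Prop),
    E a X <-> E b (fun s => X (restr H s)).

Definition restr_dom (L : choiceType) (K : Type) (A : nat -> {fset L}) (n : nat)
  (h : {x : L | exists m, x \in A m} -> K) : {ffun A n -> K} :=
  [ffun x : A n => h (exist _ (val x) (ex_intro _ n (valP x)))].

Definition well_founded_ext (L : choiceType) (K : Type) (E : extender_system L K) : Prop :=
  forall (A : nat -> {fset L}) (X : forall n, {ffun A n -> K} -> Prop),
    (forall n, E (A n) (X n)) ->
    exists h : {x : L | exists m, x \in A m} -> K, forall n, X n (restr_dom n h).

(* Vocabularies tau: function symbols F (arity far) and relation        *)
(* symbols R (arity rar); constants are 0-ary function symbols.         *)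
Record structure (F : Type) (far : F -> nat) (R : Type) (rar : R -> nat) := Structure {
  carrier :> Type;
  funs : forall f : F, ('I_(far f) -> carrier) -> carrier;
  rels : forall r : R, ('I_(rar r) -> carrier) -> Prop }.
Arguments carrier {F far R rar} s.
Arguments funs {F far R rar} s f _.
Arguments rels {F far R rar} s r _.

Inductive term (F : Type) (far : F -> nat) (n : nat) : Type :=
| Var : 'I_n -> term far n
| App : forall f : F, ('I_(far f) -> term far n) -> term far n.

(* Formulas of L_{kappa,omega}(Q^WF)(tau) with free variables among the *)
(* n variables 'I_n (formula phi(x_1,...,x_n)).                          *)
Inductive form (K : Type) (F : Type) (far : F -> nat) (R : Type) (rar : R -> nat)
  : nat -> Type :=
| FEq : forall n, term far n -> term far n -> form K far rar n
| FRel : forall n (r : R), ('I_(rar r) -> term far n) -> form K far rar n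
| FNeg : forall n, form K far rar n -> form K far rar n
| FAnd : forall n (I : Type), card_lt I K -> (I -> form K far rar n) -> form K far rar n
| FEx : forall n, form K far rar n.+1 -> form K far rar n
(* FQWF phi with phi(x, y, zbar): x is variable 0, y is variable 1.   *)
| FQWF : forall n, form K far rar n.+2 -> form K far rar n.

Definition scons (T : Type) (n : nat) (x : T) (v : 'I_n -> T) : 'I_n.+1 -> T :=
  fun i => match unlift ord0 i with Some j => v j | None => x end.

Fixpoint eval_term (F : Type) (far : F -> nat) (R : Type) (rar : R -> nat)
  (M : structure far rar) (n : nat) (v : 'I_n -> M) (t : term far n) : M :=
  match t with
  | @Var _ _ _ i => v i
  | @App _ _ _ f ts => funs M f (fun j => eval_term v (ts j))
  end.

Fixpoint sat (K : Type) (F : Type) (far : F -> nat) (R : Type) (rar : R -> nat)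
  (M : structure far rar) (n : nat) (phi : form K far rar n) : ('I_n -> M) -> Prop :=
  match phi in form _ _ _ m return ('I_m -> M) -> Prop with
  | @FEq _ _ _ _ _ _ t1 t2 => fun v => eval_term v t1 = eval_term v t2
  | @FRel _ _ _ _ _ _ r ts => fun v => rels M r (fun j => eval_term v (ts j))
  | @FNeg _ _ _ _ _ _ psi => fun v => ~ sat psi v
  | @FAnd _ _ _ _ _ _ J _ ps => fun v => forall i, sat (ps i) v
  | @FEx _ _ _ _ _ _ psi => fun v => exists x : M, sat psi (scons x v)
  | @FQWF _ _ _ _ _ _ psi => fun v =>
      ~ exists xs : nat -> M, forall k, sat psi (scons (xs k.+1) (scons (xs k) v))
  end.

Lemma sub_Ul (L : choiceType) (a b c : {fset L}) : a `<=` b -> a `<=` b `|` c.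
Proof. by move=> H; apply: fsubset_trans H (fsubsetUl _ _). Qed.

Lemma sub_big (L : choiceType) (a : {fset L}) (n : nat) (b : 'I_n -> {fset L})
  (j : 'I_n) : b j `<=` a `|` \bigcup_(i | true) b i.
Proof.
apply: fsubset_trans (fsubsetUr _ _).
by rewrite (bigfcup_sup (j := j)) // mem_index_enum.
Qed.

Record rep (L : choiceType) (K : Type) (F : Type) (far : F -> nat) (R : Type)
  (rar : R -> nat) (a : {fset L}) (M : {ffun a -> K} -> structure far rar) := Rep {
  rb : {fset L};
  rsub : a `<=` rb;
  rf : forall s : {ffun rb -> K}, M (restr rsub s) }.
Arguments rb {L K F far R rar a M} r.
Arguments rsub {L K F far R rar a M} r.
Arguments rf {L K F far R rar a M} r s.

(* The value f(s|bbar) in M_{s|abar}, for s in ^cbar kappa with bbar <= cbar. *)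
Definition rep_at (L : choiceType) (K : Type) (F : Type) (far : F -> nat) (R : Type)
  (rar : R -> nat) (a : {fset L}) (M : {ffun a -> K} -> structure far rar)
  (p : rep M) (c : {fset L}) (Hpc : rb p `<=` c) (Hac : a `<=` c)
  (s : {ffun c -> K}) : M (restr Hac s) :=
  eq_rect _ (fun t => carrier (M t)) (rf p (restr Hpc s)) _
    (restr_trans (rsub p) Hpc Hac s).

Definition rep_eq (L : choiceType) (K : Type) (E : extender_system L K)
  (F : Type) (far : F -> nat) (R : Type) (rar : R -> nat) (a : {fset L})
  (M : {ffun a -> K} -> structure far rar) (p q : rep M) : Prop :=
  E (rb p `|` rb q)
    (fun s => rep_at (fsubsetUl (rb p) (rb q)) (sub_Ul (rb q) (rsub p)) s
            = rep_at (fsubsetUr (rb p) (rb q)) (sub_Ul (rb q) (rsub p)) s).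

Definition ultra_car (L : choiceType) (K : Type) (E : extender_system L K)
  (F : Type) (far : F -> nat) (R : Type) (rar : R -> nat) (a : {fset L})
  (M : {ffun a -> K} -> structure far rar) : Type :=
  {C : rep M -> Prop | exists p, C = rep_eq E p}.

Definition cls (L : choiceType) (K : Type) (E : extender_system L K)
  (F : Type) (far : F -> nat) (R : Type) (rar : R -> nat) (a : {fset L})
  (M : {ffun a -> K} -> structure far rar) (p : rep M) : ultra_car E M :=
  exist _ (rep_eq E p) (ex_intro _ p erefl).

Definition crepr (L : choiceType) (K : Type) (E : extender_system L K)
  (F : Type) (far : F -> nat) (R : Type) (rar : R -> nat) (a : {fset L})
  (M : {ffun a -> K} -> structure far rar) (C : ultra_car E M) : rep M :=
  proj1_sig (constructive_indefinite_description _ (proj2_sig C)).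

Definition big_dom (L : choiceType) (K : Type) (F : Type) (far : F -> nat) (R : Type)
  (rar : R -> nat) (a : {fset L}) (M : {ffun a -> K} -> structure far rar)
  (n : nat) (ps : 'I_n -> rep M) : {fset L} :=
  a `|` \bigcup_(i | true) rb (ps i).

Definition ultraprod (L : choiceType) (K : Type) (E : extender_system L K)
  (F : Type) (far : F -> nat) (R : Type) (rar : R -> nat) (a : {fset L})
  (M : {ffun a -> K} -> structure far rar) : structure far rar :=
  @Structure F far R rar (ultra_car E M)
    (fun f cs =>
       let ps := fun j => crepr (cs j) in
       cls E (@Rep L K F far R rar a M (big_dom ps) (fsubsetUl _ _)
         (fun s => funs (M (restr (fsubsetUl _ _) s)) f
            (fun j => rep_at (sub_big a (fun i => rb (ps i)) j) (fsubsetUl _ _) s))))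
    (fun r cs =>
       let ps := fun j => crepr (cs j) in
       E (big_dom ps)
         (fun s => rels (M (restr (fsubsetUl _ _) s)) r
            (fun j => rep_at (sub_big a (fun i => rb (ps i)) j) (fsubsetUl _ _) s))).

Definition los_property (L : choiceType) (K : Type) (E : extender_system L K) : Prop :=
  forall (F : Type) (far : F -> nat) (R : Type) (rar : R -> nat) (a : {fset L})
    (M : {ffun a -> K} -> structure far rar),
    (forall s, inhabited (carrier (M s))) ->
    forall (n : nat) (phi : form K far rar n) (ps : 'I_n -> rep M),
      sat (M := ultraprod E M) phi (fun i => cls E (ps i)) <->
      E (big_dom ps)
        (fun s => sat (M := M (restr (fsubsetUl _ _) s)) phi
           (fun i => rep_at (sub_big a (fun j => rb (ps j)) i) (fsubsetUl _ _) s)).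

(* Main.v *)
Require Import Defs.
From mathcomp Require Import all_boot.
From mathcomp Require Import finmap.
From Stdlib Require Import ClassicalEpsilon Classical ProofIrrelevance Eqdep FunctionalExtensionality PropExtensionality.

Set Implicit Arguments.
Unset Strict Implicit.
Unset Printing Implicit Defensive.
Local Open Scope fset_scope.


Lemma UIPx (T : Type) (x y : T) (e1 e2 : x = y) : e1 = e2.
Proof. exact: Eqdep.EqdepTheory.UIP. Qed.

Section UF.
Variables (K T : Type) (U : (T -> Prop) -> Prop).
Hypothesis HU : kcomplete_ultrafilter K U.

Lemma uf_mono X Y : U X -> (forall t, X t -> Y t) -> U Y.
Proof. by case: HU => _ [_ [H _]]; apply: H. Qed.

Lemma uf_and X Y : U X -> U Y -> U (fun t => X t /\ Y t).
Proof. by case: HU => _ [_ [_ [H _]]]; apply: H. Qed.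

Lemma uf_true : U (fun _ => True).
Proof. by case: HU. Qed.

Lemma uf_ext X Y : (forall t, X t <-> Y t) -> U X <-> U Y.
Proof. by move=> H; split=> HX; apply: uf_mono HX _ => t /H. Qed.

Lemma uf_ae_iff Z X Y : U Z -> (forall t, Z t -> (X t <-> Y t)) -> U X <-> U Y.
Proof.
move=> HZ H; split=> HX; apply: uf_mono (uf_and HZ HX) _ => t [/H]; firstorder.
Qed.

Lemma uf_not X : U (fun t => ~ X t) <-> ~ U X.
Proof.
split.
  move=> HN HX; case: HU => _ [H0 _]; apply: H0.
  by apply: uf_mono (uf_and HX HN) _ => t [].
move=> HX; case: HU => _ [_ [_ [_ [_ H]]]]; by case: (H X).
Qed.

Lemma uf_seq (I : eqType) (s : seq I) (X : I -> T -> Prop) :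
  (forall i, U (X i)) -> U (fun t => forall i, i \in s -> X i t).
Proof.
move=> HX; elim: s => [|i s IH].
  by apply: uf_mono uf_true _ => t _ i.
apply: uf_mono (uf_and (HX i) IH) _ => t [H1 H2] j.
rewrite in_cons => /orP [/eqP -> //| Hj]; exact: H2.
Qed.

Lemma uf_fin (I : finType) (X : I -> T -> Prop) :
  (forall i, U (X i)) -> U (fun t => forall i, X i t).
Proof.
move=> HX; apply: uf_mono (uf_seq (enum I) HX) _ => t H i.
by apply: H; rewrite mem_enum.
Qed.

Lemma uf_all (I : Type) (X : I -> T -> Prop) : card_lt I K ->
  (forall i, U (X i)) -> U (fun t => forall i, X i t).
Proof. by case: HU => _ [_ [_ [_ [H _]]]]; apply: H. Qed.

End UF.


Section Main.
Unset Implicit Arguments.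
Variables (L : choiceType) (K : Type) (E : extender_system L K).
Set Implicit Arguments.
Hypothesis HE : forall b : {fset L}, kcomplete_ultrafilter K (E b).
Hypothesis Hcoh : coherent E.
Variables (F : Type) (far : F -> nat) (R : Type) (rar : R -> nat) (a : {fset L})
  (M : {ffun a -> K} -> structure far rar).
Hypothesis Minh : forall s, inhabited (M s).

Local Notation P := (fun t : {ffun a -> K} => carrier (M t)).
Local Notation UP := (ultraprod E M).

Lemma cast_gen (J : Type) (Phi : forall t, (J -> P t) -> Prop) t t' (e : t = t')
  (v : J -> P t) : Phi t' (fun j => eq_rect t P (v j) t' e) <-> Phi t v.
Proof. by case: t' / e. Qed.

Lemma cast_funs (f : F) t t' (e : t = t') (v : 'I_(far f) -> P t) :
  eq_rect t P (funs (M t) f v) t' e = funs (M t') f (fun j => eq_rect t P (v j) t' e).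
Proof. by case: t' / e. Qed.

Lemma rf_transport (p : rep M) (u u' : {ffun rb p -> K}) (eu : u = u') t
  (e : restr (rsub p) u = t) t' (e' : restr (rsub p) u' = t') (ett : t = t') :
  eq_rect t P (eq_rect _ P (rf p u) t e) t' ett = eq_rect _ P (rf p u') t' e'.
Proof.
subst u'; subst t; destruct ett; by rewrite (UIPx e' erefl).
Qed.

Lemma restr_id (c : {fset L}) (H : c `<=` c) (s : {ffun c -> K}) : restr H s = s.
Proof. by apply/ffunP => x; rewrite ffunE; congr (s _); apply: val_inj. Qed.

Lemma rep_at_restr (p : rep M) c c' (Hpc : rb p `<=` c) (Hac : a `<=` c)
  (Hcc : c `<=` c') (Hpc' : rb p `<=` c') (Hac' : a `<=` c') (s : {ffun c' -> K}) :
  eq_rect _ P (rep_at Hpc Hac (restr Hcc s)) _ (restr_trans Hac Hcc Hac' s)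
  = rep_at Hpc' Hac' s.
Proof. rewrite /rep_at; apply: rf_transport; exact: restr_trans. Qed.

Lemma rep_at_pi (p p' : rep M) (e : p = p') c (H : rb p `<=` c) (H' : rb p' `<=` c)
  (Hac : a `<=` c) s : rep_at H Hac s = rep_at H' Hac s.
Proof. subst p'; by rewrite (bool_irrelevance H H'). Qed.

Lemma rep_at_self c (Hac : a `<=` c) (g : forall s : {ffun c -> K}, M (restr Hac s))
  (Hcc : c `<=` c) s : rep_at (p := Rep g) Hcc Hac s = g s.
Proof.
have := @rf_transport (Rep g) _ _ (restr_id Hcc s) _ (restr_trans Hac Hcc Hac s) _ erefl erefl.
by rewrite /rep_at /=.
Qed.

Lemma indep (J : Type) (ps : J -> rep M) (Phi : forall t, (J -> P t) -> Prop)
  c c' (Hcc : c `<=` c') (Hac : a `<=` c) (Hic : forall j, rb (ps j) `<=` c)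
  (Hac' : a `<=` c') (Hic' : forall j, rb (ps j) `<=` c') :
  E c (fun s => Phi (restr Hac s) (fun j => rep_at (Hic j) Hac s)) <->
  E c' (fun s => Phi (restr Hac' s) (fun j => rep_at (Hic' j) Hac' s)).
Proof.
apply: iff_trans (Hcoh Hcc _) _; apply: uf_ext => // s.
rewrite -(cast_gen Phi (restr_trans Hac Hcc Hac' s)).
have -> // : (fun j => eq_rect _ P (rep_at (Hic j) Hac (restr Hcc s)) _
   (restr_trans Hac Hcc Hac' s)) = (fun j => rep_at (Hic' j) Hac' s).
apply: functional_extensionality => j; exact: rep_at_restr.
Qed.


Lemma rep_eqE (p q : rep M) c (Hpc : rb p `<=` c) (Hqc : rb q `<=` c) (Hac : a `<=` c) :
  rep_eq E p q <-> E c (fun s => rep_at Hpc Hac s = rep_at Hqc Hac s).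
Proof.
pose ps := fun b : bool => if b then p else q.
pose Phi := fun t (v : bool -> P t) => v true = v false.
have H1 : rb p `|` rb q `<=` (rb p `|` rb q) `|` c by apply: fsubsetUl.
have H2 : c `<=` (rb p `|` rb q) `|` c by apply: fsubsetUr.
have Ha1 : a `<=` (rb p `|` rb q) `|` c by apply: fsubset_trans Hac H2.
have Hi1 : forall b, rb (ps b) `<=` (rb p `|` rb q) `|` c.
  by case; rewrite /ps; [apply: fsubset_trans Hpc H2 | apply: fsubset_trans Hqc H2].
pose Hi0 := fun b : bool => match b as b0 return rb (ps b0) `<=` rb p `|` rb q with
  true => fsubsetUl (rb p) (rb q) | false => fsubsetUr (rb p) (rb q) end.
pose Hi2 := fun b : bool => match b as b0 return rb (ps b0) `<=` c with
  true => Hpc | false => Hqc end.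
apply: iff_trans (indep Phi H1 (sub_Ul (rb q) (rsub p)) Hi0 Ha1 Hi1) _.
apply: iff_sym; exact: (indep Phi H2 Hac Hi2 Ha1 Hi1).
Qed.

Lemma rep_eq_refl (p : rep M) : rep_eq E p p.
Proof.
rewrite /rep_eq; apply: (uf_mono (HE _) (uf_true (HE _))) => s _; exact: rep_at_pi.
Qed.

Lemma rep_eq_sym (p q : rep M) : rep_eq E p q -> rep_eq E q p.
Proof.
have H1 : rb p `<=` rb p `|` rb q by apply: fsubsetUl.
have H2 : rb q `<=` rb p `|` rb q by apply: fsubsetUr.
have Ha : a `<=` rb p `|` rb q by apply: fsubset_trans (rsub p) H1.
rewrite (rep_eqE H1 H2 Ha) (rep_eqE H2 H1 Ha) => H.
by apply: (uf_mono (HE _) H) => s.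
Qed.

Lemma rep_eq_trans (p q r : rep M) : rep_eq E p q -> rep_eq E q r -> rep_eq E p r.
Proof.
pose c := rb p `|` rb q `|` rb r.
have H1 : rb p `<=` c by apply: fsubset_trans (fsubsetUl _ (rb q)) (fsubsetUl _ _).
have H2 : rb q `<=` c by apply: fsubset_trans (fsubsetUr (rb p) _) (fsubsetUl _ _).
have H3 : rb r `<=` c by apply: fsubsetUr.
have Ha : a `<=` c by apply: fsubset_trans (rsub p) H1.
rewrite (rep_eqE H1 H2 Ha) (rep_eqE H2 H3 Ha) (rep_eqE H1 H3 Ha) => A B.
by apply: (uf_mono (HE _) (uf_and (HE _) A B)) => s [-> ->].
Qed.

Lemma exist_eq (C1 C2 : rep M -> Prop) h1 h2 : C1 = C2 ->
  exist (fun C => exists p, C = rep_eq E p) C1 h1 = exist _ C2 h2.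
Proof. move=> e; subst C2; by rewrite (proof_irrelevance _ h1 h2). Qed.

Lemma cls_eq (p q : rep M) : cls E p = cls E q <-> rep_eq E p q.
Proof.
split.
  move=> /(f_equal (@proj1_sig _ _)) /= e.
  apply: rep_eq_sym; rewrite -e; exact: rep_eq_refl.
move=> H; apply: exist_eq; apply: functional_extensionality => r.
apply: propositional_extensionality; split.
  by apply: rep_eq_trans; apply: rep_eq_sym.
exact: rep_eq_trans.
Qed.

Lemma cls_crepr (C : ultra_car E M) : cls E (crepr C) = C.
Proof.
case: C => C1 h; rewrite /crepr /cls /=.
case: (constructive_indefinite_description _ h) => p hp /=.
exact: exist_eq.
Qed.

Lemma scons_map (T1 T2 : Type) n (g : T1 -> T2) x (v : 'I_n -> T1) :
  (fun i => g (scons x v i)) = scons (g x) (fun i => g (v i)).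
Proof. apply: functional_extensionality => i; rewrite /scons; by case: unlift. Qed.

Lemma scons_sub n (q : rep M) (ps : 'I_n -> rep M) c : rb q `<=` c ->
  (forall i, rb (ps i) `<=` c) -> forall i, rb (scons q ps i) `<=` c.
Proof. move=> Hq Hps i; rewrite /scons; case: unlift => //. Qed.

Lemma rep_at_scons n (q : rep M) (ps : 'I_n -> rep M) c (Hac : a `<=` c)
  (Hic : forall i, rb (scons q ps i) `<=` c) (Hq : rb q `<=` c)
  (Hps : forall i, rb (ps i) `<=` c) s :
  (fun i => rep_at (Hic i) Hac s) = scons (rep_at Hq Hac s) (fun i => rep_at (Hps i) Hac s).
Proof.
apply: functional_extensionality => i; move: (Hic i); rewrite /scons.
case: (unlift ord0 i) => [j|] H; exact: rep_at_pi.
Qed.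


Lemma term_lemma n (ps : 'I_n -> rep M) (t : term far n) :
  forall (q : rep M), cls E q = eval_term (M := UP) (fun i => cls E (ps i)) t ->
  forall c (Hac : a `<=` c) (Hic : forall i, rb (ps i) `<=` c) (Hqc : rb q `<=` c),
  E c (fun s => rep_at Hqc Hac s =
     eval_term (M := M (restr Hac s)) (fun i => rep_at (Hic i) Hac s) t).
Proof.
elim: t => [i | f ts IH] q Hq c Hac Hic Hqc.
  rewrite /= in Hq; move/cls_eq: Hq; by rewrite (rep_eqE Hqc (Hic i) Hac).
pose qs := fun j => crepr (eval_term (M := UP) (fun i => cls E (ps i)) (ts j)).
have Hqs : forall j, cls E (qs j) = eval_term (M:=UP) (fun i => cls E (ps i)) (ts j).
  by move=> j; exact: cls_crepr.
pose Q := @Rep L K F far R rar a M (big_dom qs) (fsubsetUl _ _)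
   (fun s => funs (M (restr (fsubsetUl _ _) s)) f
      (fun j => rep_at (sub_big a (fun i => rb (qs i)) j) (fsubsetUl _ _) s)).
have HQ : cls E q = cls E Q by rewrite Hq.
pose c1 := c `|` big_dom qs.
have Hcc1 : c `<=` c1 by apply: fsubsetUl.
have HQ1 : rb Q `<=` c1 by apply: fsubsetUr.
have Hac1 : a `<=` c1 by apply: fsubset_trans Hac Hcc1.
have Hic1 : forall i, rb (ps i) `<=` c1 by move=> i; apply: fsubset_trans (Hic i) Hcc1.
have Hqc1 : rb q `<=` c1 by apply: fsubset_trans Hqc Hcc1.
have Hqs1 : forall j, rb (qs j) `<=` c1.
  by move=> j; apply: fsubset_trans (sub_big a (fun i => rb (qs i)) j) HQ1.
pose ps' := fun o : option 'I_n => match o with Some i => ps i | None => q end.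
pose Phi := fun t (v : option 'I_n -> P t) =>
  v None = eval_term (M := M t) (fun i => v (Some i)) (@App _ _ _ f ts).
pose Hi0 := fun o => match o as o0 return rb (ps' o0) `<=` c with
  Some i => Hic i | None => Hqc end.
have Hi1 : forall o, rb (ps' o) `<=` c1 by case.
apply: (indep Phi Hcc1 Hac Hi0 Hac1 Hi1).2.
have A1 : E c1 (fun s => rep_at (Hi1 None) Hac1 s = rep_at HQ1 Hac1 s).
  by apply/(rep_eqE _ _ _)/cls_eq.
have A2 : E c1 (fun s => forall j, rep_at (Hqs1 j) Hac1 s =
     eval_term (M := M (restr Hac1 s)) (fun i => rep_at (Hic1 i) Hac1 s) (ts j)).
  apply: (uf_fin (HE _)) => j; exact: IH.
apply: (uf_mono (HE _) (uf_and (HE _) A1 A2)) => s [e1 e2].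
rewrite /Phi /= e1.
have -> : rep_at HQ1 Hac1 s = funs (M (restr Hac1 s)) f (fun j => rep_at (Hqs1 j) Hac1 s).
  rewrite {1}/rep_at /= cast_funs; congr (funs _ f _).
  apply: functional_extensionality => j; exact: rep_at_restr.
have -> : (fun i => rep_at (Hi1 (Some i)) Hac1 s) = (fun i => rep_at (Hic1 i) Hac1 s).
  apply: functional_extensionality => i; exact: rep_at_pi.
congr (funs _ f _); apply: functional_extensionality => j; exact: e2.
Qed.


Lemma restr_dom_restr (A : nat -> {fset L}) (h : {x : L | exists m, x \in A m} -> K)
  (d : {fset L}) n m (H1 : d `<=` A n) (H2 : d `<=` A m) :
  restr H1 (restr_dom n h) = restr H2 (restr_dom m h).
Proof.
apply/ffunP => x; rewrite /restr /restr_dom; repeat rewrite ffunE; congr h.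
apply: eq_sig_hprop => //; move=> *; exact: proof_irrelevance.
Qed.

Lemma h_canon (A : nat -> {fset L}) h (p : rep M) n m (Hpn : rb p `<=` A n)
  (Han : a `<=` A n) (Hpm : rb p `<=` A m) (Ham : a `<=` A m)
  (e : restr Han (restr_dom n h) = restr Ham (restr_dom m h)) :
  eq_rect _ P (rep_at Hpn Han (restr_dom n h)) _ e = rep_at Hpm Ham (restr_dom m h).
Proof. rewrite /rep_at; apply: rf_transport; exact: restr_dom_restr. Qed.

Lemma scons_cls n (q : rep M) (ps : 'I_n -> rep M) :
  (fun i => cls E (scons q ps i)) = scons (cls E q) (fun i => cls E (ps i)).
Proof. exact: scons_map. Qed.

Lemma cast_trans t1 t2 t3 (e1 : t1 = t2) (e2 : t2 = t3) (e3 : t1 = t3) (x : P t1) :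
  eq_rect t2 P (eq_rect t1 P x t2 e1) t3 e2 = eq_rect t1 P x t3 e3.
Proof. subst t2; subst t3; by rewrite (UIPx e3 erefl). Qed.

Hypothesis WF : well_founded_ext E.

Lemma los_gen n (phi : form K far rar n) :
  forall (ps : 'I_n -> rep M) c (Hac : a `<=` c) (Hic : forall i, rb (ps i) `<=` c),
  sat (M := UP) phi (fun i => cls E (ps i)) <->
  E c (fun s => sat (M := M (restr Hac s)) phi (fun i => rep_at (Hic i) Hac s)).
Proof.
elim: phi => {n} [n t1 t2 | n r ts | n psi IH | n I HI phis IH | n psi IH | n psi IH]
  ps c Hac Hic.
-
  pose q1 := crepr (eval_term (M:=UP) (fun i => cls E (ps i)) t1).
  pose q2 := crepr (eval_term (M:=UP) (fun i => cls E (ps i)) t2).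
  have e1 : cls E q1 = eval_term (M:=UP) (fun i => cls E (ps i)) t1 by apply: cls_crepr.
  have e2 : cls E q2 = eval_term (M:=UP) (fun i => cls E (ps i)) t2 by apply: cls_crepr.
  pose c1 := c `|` (rb q1 `|` rb q2).
  have Hcc1 : c `<=` c1 by apply: fsubsetUl.
  have Hq11 : rb q1 `<=` c1 by apply: fsubset_trans (fsubsetUl _ _) (fsubsetUr _ _).
  have Hq21 : rb q2 `<=` c1 by apply: fsubset_trans (fsubsetUr _ _) (fsubsetUr _ _).
  have Hac1 : a `<=` c1 by apply: fsubset_trans Hac Hcc1.
  have Hic1 : forall i, rb (ps i) `<=` c1 by move=> i; apply: fsubset_trans (Hic i) Hcc1.
  rewrite /= -e1 -e2 cls_eq (rep_eqE Hq11 Hq21 Hac1).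
  pose Phi := fun t (v : 'I_n -> P t) =>
     eval_term (M := M t) v t1 = eval_term (M := M t) v t2.
  apply: iff_trans _ (iff_sym (indep Phi Hcc1 Hac Hic Hac1 Hic1)).
  have T1 := term_lemma e1 Hac1 Hic1 Hq11.
  have T2 := term_lemma e2 Hac1 Hic1 Hq21.
  by apply: (uf_ae_iff (HE _) (uf_and (HE _) T1 T2)) => s [-> ->].
-
  pose qs := fun j => crepr (eval_term (M := UP) (fun i => cls E (ps i)) (ts j)).
  have Hqs : forall j, cls E (qs j) = eval_term (M:=UP) (fun i => cls E (ps i)) (ts j).
    by move=> j; exact: cls_crepr.
  pose c1 := c `|` big_dom qs.
  have Hcc1 : c `<=` c1 by apply: fsubsetUl.
  have H01 : big_dom qs `<=` c1 by apply: fsubsetUr.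
  have Hac1 : a `<=` c1 by apply: fsubset_trans Hac Hcc1.
  have Hic1 : forall i, rb (ps i) `<=` c1 by move=> i; apply: fsubset_trans (Hic i) Hcc1.
  have Hqs1 : forall j, rb (qs j) `<=` c1.
    by move=> j; apply: fsubset_trans (sub_big a (fun i => rb (qs i)) j) H01.
  pose PhiR := fun t (v : 'I_(rar r) -> P t) => rels (M t) r v.
  apply: iff_trans (indep PhiR H01 (fsubsetUl _ _) (sub_big a (fun i => rb (qs i))) Hac1 Hqs1) _.
  pose Phi2 := fun t (v : 'I_n -> P t) =>
     rels (M t) r (fun j => eval_term (M := M t) v (ts j)).
  apply: iff_trans _ (iff_sym (indep Phi2 Hcc1 Hac Hic Hac1 Hic1)).
  have T : E c1 (fun s => forall j, rep_at (Hqs1 j) Hac1 s =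
     eval_term (M := M (restr Hac1 s)) (fun i => rep_at (Hic1 i) Hac1 s) (ts j)).
    apply: (uf_fin (HE _)) => j; exact: term_lemma.
  apply: (uf_ae_iff (HE _) T) => s Hz.
  by rewrite /PhiR /Phi2 (functional_extensionality _ _ Hz).
-
  rewrite /= (IH ps c Hac Hic); exact: iff_sym (uf_not (HE _) _).
-
  rewrite /=; split => H.
    apply: (uf_all (HE _) HI) => i; exact/IH.
  move=> i; apply/(IH i ps c Hac Hic); apply: (uf_mono (HE _) H) => s; apply.
-
  rewrite /=; split.
    case=> x Hx.
    pose q := crepr x.
    have ex : x = cls E q by rewrite cls_crepr.
    pose c1 := c `|` rb q.
    have Hcc1 : c `<=` c1 by apply: fsubsetUl.
    have Hq1 : rb q `<=` c1 by apply: fsubsetUr.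
    have Hac1 : a `<=` c1 by apply: fsubset_trans Hac Hcc1.
    have Hic1 : forall i, rb (ps i) `<=` c1 by move=> i; apply: fsubset_trans (Hic i) Hcc1.
    have Hsc := scons_sub Hq1 Hic1.
    have := (IH (scons q ps) c1 Hac1 Hsc).1.
    rewrite scons_cls -ex => /(_ Hx) H.
    pose Phi := fun t (v : 'I_n -> P t) => exists y : M t, sat (M := M t) psi (scons y v).
    apply: (indep Phi Hcc1 Hac Hic Hac1 Hic1).2.
    apply: (uf_mono (HE _) H) => s; rewrite (rep_at_scons Hac1 Hsc Hq1 Hic1 s) => Hs.
    by exists (rep_at Hq1 Hac1 s).
  move=> H.
  pose g := fun s : {ffun c -> K} => epsilon (Minh (restr Hac s))
     (fun y => sat (M := M (restr Hac s)) psi (scons y (fun i => rep_at (Hic i) Hac s))).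
  pose q := @Rep _ _ _ _ _ _ a M c Hac g.
  have Hq : rb q `<=` c by apply: fsubset_refl.
  have Hsc := scons_sub Hq Hic.
  exists (cls E q).
  rewrite -scons_cls; apply/(IH (scons q ps) c Hac Hsc).
  apply: (uf_mono (HE _) H) => s Hs.
  rewrite (rep_at_scons Hac Hsc Hq Hic s) rep_at_self.
  exact: (epsilon_spec _ _ Hs).
-
  rewrite /=; split.
  + move=> HL; apply: NNPP => HN.
    have := (uf_not (HE c) _).2 HN => HN'.
    have inh : forall s, inhabited (nat -> M (restr Hac s)).
      by move=> s; case: (Minh (restr Hac s)) => y; constructor; exact: (fun _ => y).
    pose ysf := fun s : {ffun c -> K} => epsilon (inh s)
      (fun ys : nat -> M (restr Hac s) => forall k, sat (M := M (restr Hac s)) psi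
         (scons (ys k.+1) (scons (ys k) (fun i => rep_at (Hic i) Hac s)))).
    pose q := fun k => @Rep _ _ _ _ _ _ a M c Hac (fun s => ysf s k).
    apply: HL; exists (fun k => cls E (q k)) => k.
    have Hq : forall k, rb (q k) `<=` c by move=> ?; apply: fsubset_refl.
    have Hs1 := scons_sub (Hq k) Hic.
    have Hs2 := scons_sub (Hq k.+1) Hs1.
    rewrite -scons_cls -scons_cls; apply/(IH _ c Hac Hs2).
    apply: (uf_mono (HE _) HN') => s /NNPP Hs.
    rewrite (rep_at_scons Hac Hs2 (Hq k.+1) Hs1 s) (rep_at_scons Hac Hs1 (Hq k) Hic s).
    rewrite !rep_at_self.
    exact: (epsilon_spec (inh s) _ Hs k).
  + move=> HR [xs Hxs].
    pose q := fun k => crepr (xs k).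
    have exs : forall k, xs k = cls E (q k) by move=> k; rewrite cls_crepr.
    pose ck := fun k => c `|` (rb (q k) `|` rb (q k.+1)).
    have Hcck : forall k, c `<=` ck k by move=> k; apply: fsubsetUl.
    have Hqk : forall k, rb (q k) `<=` ck k.
      by move=> k; apply: fsubset_trans (fsubsetUl _ _) (fsubsetUr _ _).
    have Hqk1 : forall k, rb (q k.+1) `<=` ck k.
      by move=> k; apply: fsubset_trans (fsubsetUr _ _) (fsubsetUr _ _).
    have Hack : forall k, a `<=` ck k by move=> k; apply: fsubset_trans Hac (Hcck k).
    have Hick : forall k i, rb (ps i) `<=` ck k.
      by move=> k i; apply: fsubset_trans (Hic i) (Hcck k).
    have Hs1 := fun k => scons_sub (Hqk k) (Hick k).
    have Hs2 := fun k => scons_sub (Hqk1 k) (Hs1 k).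
    have HX : forall k, E (ck k) (fun s => sat (M := M (restr (Hack k) s)) psi
                 (fun i => rep_at (Hs2 k i) (Hack k) s)).
      move=> k; apply/IH; rewrite scons_cls scons_cls -!exs; exact: Hxs.
    pose A := fun m => match m with 0 => c | k.+1 => ck k end.
    pose X := fun m => match m return {ffun A m -> K} -> Prop with
       0 => fun s => ~ exists ys : nat -> M (restr Hac s), forall k,
              sat (M := M (restr Hac s)) psi
                (scons (ys k.+1) (scons (ys k) (fun i => rep_at (Hic i) Hac s)))
     | k.+1 => fun s => sat (M := M (restr (Hack k) s)) psi
                 (fun i => rep_at (Hs2 k i) (Hack k) s) end.
    have HAX : forall m, E (A m) (X m) by case => [|k] //=; exact: HX.
    have [h Hh] := WF HAX.
    apply: (Hh 0).
    have e : forall k, restr (Hack k) (restr_dom k.+1 h) = restr Hac (restr_dom 0 h).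
      move=> k; exact: (@restr_dom_restr A h a k.+1 0 (Hack k) Hac).
    exists (fun k => eq_rect _ P (rep_at (Hqk k) (Hack k) (restr_dom k.+1 h)) _ (e k)).
    move=> k.
    have Hk := Hh k.+1; rewrite /= in Hk.
    rewrite (rep_at_scons (Hack k) (Hs2 k) (Hqk1 k) (Hs1 k)) in Hk.
    rewrite (rep_at_scons (Hack k) (Hs1 k) (Hqk k) (Hick k)) in Hk.
    move: Hk; rewrite -(cast_gen (fun t v => sat (M := M t) psi v) (e k)).
    rewrite (scons_map (fun y : P (restr (Hack k) (restr_dom k.+1 h)) => eq_rect _ P y _ (e k))).
    rewrite (scons_map (fun y : P (restr (Hack k) (restr_dom k.+1 h)) => eq_rect _ P y _ (e k))) /=.
    have -> : (fun i => eq_rect _ P (rep_at (Hick k i) (Hack k) (restr_dom k.+1 h)) _ (e k))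
            = (fun i => rep_at (Hic i) Hac (restr_dom 0 h)).
      apply: functional_extensionality => i.
      exact: (h_canon (A := A) (n := k.+1) (m := 0)).
    have e' : restr (Hack k) (restr_dom k.+1 h) = restr (Hack k.+1) (restr_dom k.+2 h).
      exact: (@restr_dom_restr A h a k.+1 k.+2 (Hack k) (Hack k.+1)).
    rewrite -(cast_trans e' (e k.+1) (e k)).
    by rewrite (h_canon (A:=A) (h:=h) (n:=k.+1) (m:=k.+2) (Hqk1 k) (Hqk k.+1) e').
Qed.

End Main.


Section Converse.
Unset Implicit Arguments.
Variables (L : choiceType) (K : Type) (E : extender_system L K).
Set Implicit Arguments.
Hypothesis HE : forall b : {fset L}, kcomplete_ultrafilter K (E b).
Hypothesis Hcoh : coherent E.
Unset Implicit Arguments.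
Variables (A : nat -> {fset L}) (X : forall n, {ffun A n -> K} -> Prop).
Set Implicit Arguments.
Hypothesis HX : forall n, E (A n) (X n).

Definition B n : {fset L} := \bigcup_(m <- iota 0 n) A m.

Lemma subAB m n (Hm : (m < n)%N) : A m `<=` B n.
Proof. by apply: bigfcup_sup => //; rewrite mem_iota. Qed.

Lemma subBB n : B n `<=` B n.+1.
Proof.
apply/bigfcupsP => i; rewrite mem_iota add0n => /andP [_ Hi] _.
by apply: subAB; apply: ltn_trans Hi _.
Qed.

Definition good n (t : {ffun B n -> K}) : Prop :=
  forall m (Hm : (m < n)%N), X m (restr (subAB Hm) t).

Definition node := option {n : nat & {ffun B n -> K}}.

Definition child (y x : node) : Prop :=
  match x with
  | Some (existT n t) => exists t' : {ffun B n.+1 -> K},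
       y = Some (existT _ n.+1 t') /\ good t' /\ restr (subBB n) t' = t
  | None => False
  end.

Definition getv (o : node) (z : L) : option K :=
  match o with Some (existT n t) => omap t (insub z) | None => None end.

Definition lvl (o : node) : nat := match o with Some (existT n _) => n | None => 0 end.

Lemma getv_child y x z v : child y x -> getv x z = Some v -> getv y z = Some v.
Proof.
case: x => [[n t]|] //= [t' [-> [_ <-]]] /=.
case: insubP => //= u Hu Hz [<-].
rewrite insubT; first by apply: (fsubsetP (subBB n)).
move=> Hz' /=; rewrite /restr ffunE; congr (Some (t' _)); exact: val_inj.
Qed.

Lemma lvl_child y x : child y x -> lvl y = (lvl x).+1.
Proof. by case: x => [[n t]|] //= [t' [-> _]]. Qed.

Lemma no_branch : (~ exists h, forall n, X n (restr_dom n h)) ->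
  ~ exists ys : nat -> node, forall k, child (ys k.+1) (ys k).
Proof.
move=> Hno [ys Hys]; apply: Hno.
have ext : forall d e z v, getv (ys d) z = Some v -> getv (ys (d + e)%N) z = Some v.
  move=> d e z v H; elim: e => [|e IH]; first by rewrite addn0.
  by rewrite addnS; apply: getv_child (Hys _) IH.
have agree : forall d1 d2 z v1 v2, getv (ys d1) z = Some v1 ->
    getv (ys d2) z = Some v2 -> v1 = v2.
  move=> d1 d2 z v1 v2 /(ext _ d2) H1 /(ext _ d1); rewrite addnC H1; by case.
have lv : forall d, (d <= lvl (ys d))%N.
  elim=> [//|d IH]; by rewrite (lvl_child (Hys d)).
have top : forall m, exists n t, ys m.+1 = Some (existT _ n t) /\ good t /\ (m < n)%N.
  move=> m; have := Hys m; have := lv m; case: (ys m) => [[n t]|] /=; last by move=> _ [].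
  move=> Hl [t' [e [g _]]].
  exists n.+1. exists t'. split; first done. split; first done.
  by apply: leq_trans Hl _.
pose W := {x : L | exists m, x \in A m}.
have spec : forall w : W, exists y, exists d, getv (ys d) (proj1_sig w) = Some y.
  case=> x [m Hm] /=; have [n [t [e [_ Hmn]]]] := top m.
  have Hx : x \in B n by apply: (fsubsetP (subAB Hmn)).
  exists (t [` Hx]), m.+1; by rewrite e /= insubT.
have inhK : forall w : W, inhabited K.
  by move=> w; have [y _] := spec w; constructor.
pose h := fun w : W => epsilon (inhK w) (fun y => exists d, getv (ys d) (proj1_sig w) = Some y).
exists h => m.
have [n [t [e [g Hmn]]]] := top m.
suff -> : restr_dom m h = restr (subAB Hmn) t by apply: g.
apply/ffunP => x; rewrite /restr_dom /restr !ffunE.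
set w := exist _ _ _.
have [d Hd] : exists d, getv (ys d) (proj1_sig w) = Some (h w).
  by apply: (epsilon_spec (inhK w) (fun y => exists d, getv (ys d) (proj1_sig w) = Some y)).
have H2 : getv (ys m.+1) (proj1_sig w) = Some (t (fincl (subAB Hmn) x)).
  rewrite e /= insubT /=; first by apply: (fsubsetP (subAB Hmn)); apply: valP.
  move=> Hx /=; congr (Some (t _)); exact: val_inj.
exact: agree Hd H2.
Qed.


Hypothesis Hlos : los_property E.

Definition far0 := fun _ : Empty_set => 0.
Definition rar0 := fun _ : unit => 2.
Definition N : structure far0 rar0 :=
  @Structure Empty_set far0 unit rar0 node (fun f _ => match f with end)
    (fun _ v => child (v ord0) (v (lift ord0 ord0))).
Definition phi2 : form K far0 rar0 2 :=
  @FRel K _ far0 _ rar0 2 tt (fun j => @Var _ far0 2 j).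

Lemma scons_0 (T : Type) n (x : T) (v : 'I_n -> T) : scons x v ord0 = x.
Proof. by rewrite /scons unlift_none. Qed.

Lemma scons_S (T : Type) n (x : T) (v : 'I_n -> T) j : scons x v (lift ord0 j) = v j.
Proof. by rewrite /scons liftK. Qed.

Lemma eq_rect_const (T : Type) (x y : T) (Q : Type) (b : Q) (e : x = y) :
  eq_rect x (fun _ => Q) b y e = b.
Proof. by case: y / e. Qed.

Lemma exists_h : exists h, forall n, X n (restr_dom n h).
Proof.
apply: NNPP => Hno.
have NB := no_branch Hno.
pose a0 : {fset L} := fset0.
pose M := fun _ : {ffun a0 -> K} => N.
have Minh : forall s, inhabited (M s) by move=> s; exact: (inhabits None).
pose p := fun k => @Rep L K _ far0 _ rar0 a0 M (B k) (fsub0set _)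
   (fun s => Some (existT (fun n => {ffun B n -> K}) k s)).
pose ps0 := fun _ : 'I_0 => p 0.
have L0 := @Hlos Empty_set far0 unit rar0 a0 M Minh 0 (FQWF phi2) ps0.
have HL : ~ exists xs : nat -> ultra_car E M, forall k,
    sat (M := ultraprod E M) phi2 (scons (xs k.+1) (scons (xs k) (fun i => cls E (ps0 i)))).
  apply/L0; apply: (uf_mono (HE _) (uf_true (HE _))) => s _ /=.
  move=> [ys Hys]; apply: NB; exists ys => k; have := Hys k.
  by rewrite /= scons_S !scons_0.
apply: HL; exists (fun k => cls E (p k)) => k.
rewrite -scons_cls -scons_cls.
set ps2 := scons (p k.+1) (scons (p k) ps0).
apply/(@Hlos Empty_set far0 unit rar0 a0 M Minh 2 phi2 ps2).
set bd := big_dom ps2.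
have H1 : rb (p k.+1) `<=` bd.
  by have := sub_big a0 (fun j => rb (ps2 j)) ord0; rewrite /ps2 scons_0.
have H0 : rb (p k) `<=` bd.
  by have := sub_big a0 (fun j => rb (ps2 j)) (lift ord0 ord0); rewrite /ps2 scons_S scons_0.
have Hps0 : forall i, rb (ps0 i) `<=` bd by case.
have Hs1 := scons_sub H0 Hps0.
have rep_atE : forall j (H : rb (p j) `<=` bd) (Hac : a0 `<=` bd) s,
    rep_at H Hac s = Some (existT (fun n => {ffun B n -> K}) j (restr H s)).
  move=> j H Hac s; exact: eq_rect_const.
have HAj : forall j : 'I_k.+1, A j `<=` bd.
  move=> j; exact: fsubset_trans (subAB (ltn_ord j)) H1.
have G : E bd (fun s => forall j : 'I_k.+1, X j (restr (HAj j) s)).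
  apply: (uf_fin (HE bd)) => j; exact: (Hcoh (HAj j) (X j)).1 (HX j).
apply: (uf_mono (HE _) G) => s Gs.
rewrite /=.
have -> : rep_at (sub_big a0 (fun j => rb (ps2 j)) ord0) (fsubsetUl _ _) s
    = rep_at H1 (fsubsetUl _ _) s.
  by apply: rep_at_pi; rewrite /ps2 scons_0.
have -> : rep_at (sub_big a0 (fun j => rb (ps2 j)) (lift ord0 ord0)) (fsubsetUl _ _) s
    = rep_at H0 (fsubsetUl _ _) s.
  by apply: rep_at_pi; rewrite /ps2 scons_S scons_0.
rewrite !rep_atE /=.
exists (restr H1 s); split; first done; split; last exact: restr_trans.
move=> m Hm; rewrite (restr_trans (subAB Hm) H1 (HAj (Ordinal Hm)) s).
exact: (Gs (Ordinal Hm)).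
Qed.

End Converse.


Theorem proposition5p3 (L : choiceType) (K : Type) (E : extender_system L K) :
  (forall a : {fset L}, kcomplete_ultrafilter K (E a)) ->
  coherent E ->
  (well_founded_ext E <-> los_property E).
Proof.
move=> HE Hcoh; split.
  move=> WF F far R rar a M Minh n phi ps.
  exact: (los_gen HE Hcoh Minh WF phi (fsubsetUl _ _) (sub_big a (fun j => rb (ps j)))).
move=> Hlos A X HX; exact: (exists_h HE Hcoh HX Hlos).
Qed.
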